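(* Let $A = (a_{ij})$ be a random $n\times n$ matrix with $a_{ij}=0$ for $i\ge j$ and with the entries $a_{ij}$, $1\le i<j\le n$, independent standard normal random variables. Then for every $n \ge 1$, \[ \mathbb{E}_A\Big[\min_{z\in\{\pm1\}^n} z^T A z\Big] \ge -0.601\sqrt{n} - 0.833\, n^{3/2}. \]
   Context: Here $z^T A z = \sum_{1\le i<j\le n} a_{ij} z_i z_j$. *)

(* Defs.v *)
(* classical reals.  Gaussian expectation is defined via
   iterated improper Riemann integrals against the standard normal density. *)
From Stdlib Require Import Reals List.
Import ListNotations.
Open Scope R_scope.

Definition gauss (x : R) : R := exp (- (x * x) / 2) / sqrt (2 * PI).

Definition has_RInt (f : R -> R) (a b l : R) : Prop :=
  exists pr : Riemann_integrable f a b, RiemannInt pr = l.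

Definition has_gauss_int (f : R -> R) (l : R) : Prop :=
  exists V : R -> R,
    (forall M, 0 <= M -> has_RInt (fun x => gauss x * f x) (- M) M (V M)) /\
    (forall eps, 0 < eps -> exists M0, forall M, M0 <= M -> Rabs (V M - l) < eps).

Definition vcons (x : R) (v : nat -> R) : nat -> R :=
  fun i => match i with O => x | S k => v k end.

(* gauss_expect m g l : E[g(X_0,...,X_{m-1})] = l for X_0..X_{m-1} i.i.d.
   N(0,1) (coordinates >= m are set to 0), as iterated integrals. *)
Fixpoint gauss_expect (m : nat) (g : (nat -> R) -> R) (l : R) : Prop :=
  match m with
  | O => l = g (fun _ => 0)
  | S k => exists h : R -> R,
      (forall x, gauss_expect k (fun v => g (vcons x v)) (h x)) /\
      has_gauss_int h l
  end.

Fixpoint sumR (k : nat) (f : nat -> R) : R :=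
  match k with O => 0 | S k' => sumR k' f + f k' end.

Fixpoint signs (n : nat) : list (list R) :=
  match n with
  | O => [ [] ]
  | S k => map (cons 1) (signs k) ++ map (cons (-1)) (signs k)
  end.

Definition min_list (l : list R) : R :=
  match l with [] => 0 | x :: xs => fold_left Rmin xs x end.

(* The matrix A read off a vector v of n*n standard Gaussians:
   a_ij = v (i*n + j) for i < j, a_ij = 0 for i >= j. *)
Definition entry (n : nat) (v : nat -> R) (i j : nat) : R :=
  if Nat.ltb i j then v (i * n + j)%nat else 0.

Definition qform (n : nat) (v : nat -> R) (z : list R) : R :=
  sumR n (fun i => sumR n (fun j => entry n v i j * nth i z 0 * nth j z 0)).

Definition min_qform (n : nat) (v : nat -> R) : R :=
  min_list (map (qform n v) (signs n)).

(* Main.v *)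
Require Import Defs.
From Stdlib Require Import Reals Lra Lia Psatz List Classical ClassicalEpsilon Arith.
From Coquelicot Require Import Coquelicot.
Import ListNotations.
Open Scope R_scope.
Lemma RInt_plusR (f g : R -> R) a b : ex_RInt f a b -> ex_RInt g a b -> RInt (fun x => f x + g x) a b = RInt f a b + RInt g a b.
Proof. intros H1 H2. exact (RInt_plus (V:=R_CompleteNormedModule) f g a b H1 H2). Qed.
Lemma RInt_scalR (f : R -> R) a b k : ex_RInt f a b -> RInt (fun x => k * f x) a b = k * RInt f a b.
Proof. intros H1. exact (RInt_scal (V:=R_CompleteNormedModule) f a b k H1). Qed.
Lemma RInt_ChaslesR (f : R -> R) a b c : ex_RInt f a b -> ex_RInt f b c -> RInt f a b + RInt f b c = RInt f a c.
Proof. intros H1 H2. exact (RInt_Chasles (V:=R_CompleteNormedModule) f a b c H1 H2). Qed.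
Lemma ex_RInt_plusR (f g : R -> R) a b : ex_RInt f a b -> ex_RInt g a b -> ex_RInt (fun x => f x + g x) a b.
Proof. intros H1 H2. exact (ex_RInt_plus (V:=R_NormedModule) f g a b H1 H2). Qed.
Lemma ex_RInt_scalR (f : R -> R) a b k : ex_RInt f a b -> ex_RInt (fun x => k * f x) a b.
Proof. intros H1. exact (ex_RInt_scal (V:=R_NormedModule) f a b k H1). Qed.
Lemma ex_RInt_contR (f : R -> R) a b : (forall x, continuous f x) -> ex_RInt f a b.
Proof. intros H. apply (ex_RInt_continuous (V:=R_CompleteNormedModule)). intros; apply H. Qed.
Lemma RInt_comp_linR (f : R -> R) u v a b : ex_RInt f (u*a+v) (u*b+v) -> RInt (fun y => u * f (u*y+v)) a b = RInt f (u*a+v) (u*b+v).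
Proof. intros H. exact (RInt_comp_lin (V:=R_CompleteNormedModule) f u v a b H). Qed.
Lemma RInt_extR (f g : R -> R) a b : (forall x, f x = g x) -> RInt f a b = RInt g a b.
Proof. intros H. apply RInt_ext. intros; apply H. Qed.
Lemma ex_RInt_extR (f g : R -> R) a b : (forall x, f x = g x) -> ex_RInt f a b -> ex_RInt g a b.
Proof. intros H. apply ex_RInt_ext. intros; apply H. Qed.
Lemma cont_of_der (f : R -> R) x : ex_derive f x -> continuous f x.
Proof. apply (ex_derive_continuous (K:=R_AbsRing) (V:=R_NormedModule)). Qed.
Lemma cont_multR (f g : R -> R) x : continuous f x -> continuous g x -> continuous (fun y => f y * g y) x.
Proof. apply (continuous_mult (K:=R_AbsRing)). Qed.
Lemma cont_plusR (f g : R -> R) x : continuous f x -> continuous g x -> continuous (fun y => f y + g y) x.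
Proof. apply (continuous_plus (V:=R_NormedModule)). Qed.
Lemma Rabs_def2b x a : Rabs x <= a -> -a <= x <= a.
Proof. unfold Rabs; destruct (Rcase_abs x); lra. Qed.
Lemma Rabs_le_intro x a : -a <= x <= a -> Rabs x <= a.
Proof. unfold Rabs; destruct (Rcase_abs x); lra. Qed.
Lemma exp_le_mono x y : x <= y -> exp x <= exp y.
Proof. intros H. destruct (Rle_lt_or_eq_dec _ _ H). left; apply exp_increasing; auto. subst; lra. Qed.

Definition g0 (x:R) := exp (-(x*x)).
Definition A0 (t:R) := RInt g0 0 t.
Definition u0 (t s : R) := exp (-(t*t*(1+s*s))) / (1+s*s).
Definition du0 (t s : R) := -2*t*exp (-(t*t*(1+s*s))).
Definition B0 t := RInt (u0 t) 0 1.

Lemma plus_eq_sub (x y z : R) : x + y = z -> y = z - x.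
Proof. intros; lra. Qed.

Lemma sq_aux p q P : p*p <= P/4 -> q*q <= P/4 -> (q-p)*(q-p) <= P.
Proof. intros; nra. Qed.

Lemma inv_le_aux s X : 0 < s -> X <= s -> / s * X <= 1.
Proof. intros. apply (Rmult_le_reg_l s). lra. rewrite <- Rmult_assoc, Rinv_r by lra. lra. Qed.

Lemma plus_eq_sub2 (x y z : R) : x = plus y z -> x = y + z.
Proof. intros; auto. Qed.

Lemma abs_tri_aux (p q a b e : R) : Rabs (p - a) < e/2 -> Rabs (q - b) < e/2 -> Rabs (p + q - (a + b)) < e.
Proof. intros H1 H2. apply Rabs_def2 in H1. apply Rabs_def2 in H2. apply Rabs_def1; lra. Qed.

Lemma nz1 s : 1 + s*s <> 0. Proof. apply Rgt_not_eq. nra. Qed.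
Lemma cont_g0 x : continuous g0 x.
Proof. apply (ex_derive_continuous (K:=R_AbsRing) (V:=R_NormedModule)). unfold g0. auto_derive. auto. Qed.

Lemma cont_u0 t s : continuous (u0 t) s.
Proof. apply (ex_derive_continuous (K:=R_AbsRing) (V:=R_NormedModule)). unfold u0. auto_derive.
  apply nz1. Qed.

Lemma der_u0 t s : is_derive (fun z => u0 z s) t (du0 t s).
Proof. unfold u0, du0. auto_derive. exact I. field. apply nz1. Qed.

Lemma cont2_du0 t s : continuity_2d_pt du0 t s.
Proof.
  unfold du0. apply continuity_2d_pt_mult.
  apply continuity_2d_pt_mult. apply continuity_2d_pt_const. apply continuity_2d_pt_id1.
  apply continuity_2d_pt_filterlim.
  eapply filterlim_comp with (f := fun z : R*R => -(fst z * fst z * (1 + snd z * snd z))).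
  2: apply continuous_exp.
  apply (continuity_2d_pt_filterlim (fun u v => -(u*u*(1+v*v)))).
  apply continuity_2d_pt_opp. apply continuity_2d_pt_mult. apply continuity_2d_pt_mult; apply continuity_2d_pt_id1.
  apply continuity_2d_pt_plus. apply continuity_2d_pt_const. apply continuity_2d_pt_mult; apply continuity_2d_pt_id2.
Qed.

Lemma exRInt_g0 a b : ex_RInt g0 a b.
Proof. apply (ex_RInt_continuous (V:=R_CompleteNormedModule)). intros; apply cont_g0. Qed.

Lemma der_A0 t : is_derive A0 t (g0 t).
Proof.
  apply (is_derive_RInt g0 A0 0). apply filter_forall. intros. apply (RInt_correct (V:=R_CompleteNormedModule)). apply exRInt_g0.
  apply cont_g0.
Qed.

Lemma Derive_u0 t s : Derive (fun z => u0 z s) t = du0 t s.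
Proof. apply is_derive_unique. apply der_u0. Qed.

Lemma der_B0_aux t : is_derive B0 t (RInt (fun s => du0 t s) 0 1).
Proof.
  assert (H := is_derive_RInt_param u0 0 1 t).
  rewrite (RInt_ext (fun s => Derive (fun u => u0 u s) t) (fun s => du0 t s)) in H.
  2: { intros; apply Derive_u0. }
  apply H.
  - apply filter_forall. intros. eexists. apply der_u0.
  - intros. eapply continuity_2d_pt_ext. 2: apply cont2_du0.
    intros; simpl. rewrite Derive_u0. reflexivity.
  - apply filter_forall. intros. apply (ex_RInt_continuous (V:=R_CompleteNormedModule)). intros; apply cont_u0.
Qed.

Lemma RInt_du0 t : RInt (fun s => du0 t s) 0 1 = -2 * g0 t * A0 t.
Proof.
  rewrite (RInt_ext _ (fun s => scal (-2 * g0 t) (scal t (g0 (t * s + 0))))).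
  2: { intros. unfold du0, g0, scal; simpl; unfold mult; simpl.
       replace (t*x+0) with (t*x) by ring.
       replace (- (t * t * (1 + x * x))) with (-(t*t) + -(t*x*(t*x))) by ring.
       rewrite exp_plus. ring. }
  rewrite (RInt_scal (V:=R_CompleteNormedModule)). rewrite (RInt_comp_lin (V:=R_CompleteNormedModule)). unfold A0, scal; simpl; unfold mult; simpl.
  replace (t*0+0) with 0 by ring. replace (t*1+0) with t by ring. ring.
  apply exRInt_g0.
  apply (ex_RInt_continuous (V:=R_CompleteNormedModule)). intros. apply (ex_derive_continuous (K:=R_AbsRing) (V:=R_NormedModule)).
  unfold g0, scal; simpl; unfold mult; simpl. auto_derive. exact I.
Qed.

Definition F0 t := A0 t * A0 t + B0 t.

Lemma der_F0 t : is_derive F0 t 0.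
Proof.
  unfold F0. replace 0 with (g0 t * A0 t + A0 t * g0 t + (-2 * g0 t * A0 t)) by ring.
  assert (H1 : is_derive (fun t => A0 t * A0 t) t (g0 t * A0 t + A0 t * g0 t)).
  { apply (is_derive_mult A0 A0); try apply der_A0. intros; simpl; apply Rmult_comm. }
  assert (H2 := der_B0_aux t). rewrite RInt_du0 in H2.
  exact (is_derive_plus (K:=R_AbsRing) (V:=R_NormedModule) _ _ _ _ _ H1 H2).
Qed.

Lemma u0_0 s : u0 0 s = / (1 + s²).
Proof. unfold u0, Rsqr. replace (-(0*0*(1+s*s))) with 0 by ring. rewrite exp_0. field. apply nz1. Qed.

Lemma B0_0 : B0 0 = PI / 4.
Proof.
  unfold B0. rewrite (RInt_ext _ (fun s => / (1 + s²))).
  2: { intros. apply u0_0. }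
  rewrite <- atan_1. replace (atan 1) with (minus (atan 1) (atan 0)).
  apply (is_RInt_unique (V:=R_CompleteNormedModule)). apply (is_RInt_derive (V:=R_CompleteNormedModule)). intros. apply is_derive_atan.
  intros. apply (ex_derive_continuous (K:=R_AbsRing) (V:=R_NormedModule)). auto_derive.
  unfold Rsqr. apply nz1.
  rewrite atan_0. unfold minus, plus, opp; simpl. ring.
Qed.

Lemma F0_const t : F0 t = PI / 4.
Proof.
  destruct (MVT_gen F0 0 t (fun _ => 0)) as [c [_ Hc]].
  - intros. apply der_F0.
  - intros. apply continuity_pt_filterlim. apply (ex_derive_continuous (K:=R_AbsRing) (V:=R_NormedModule)).
    eexists. apply der_F0.
  - assert (F0 0 = PI/4). { unfold F0, A0. rewrite RInt_point. rewrite B0_0. unfold zero; simpl. ring. }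
    lra.
Qed.

Lemma A0_sq t : A0 t * A0 t <= PI / 4.
Proof.
  assert (0 <= B0 t).
  { unfold B0. apply RInt_ge_0. lra. apply (ex_RInt_continuous (V:=R_CompleteNormedModule)); intros; apply cont_u0.
    intros. unfold u0. apply Rle_mult_inv_pos. apply Rlt_le, exp_pos. assert (0 <= x*x) by nra. lra. }
  pose proof (F0_const t). unfold F0 in *. lra.
Qed.

Lemma RInt_g0_le a b : RInt g0 a b <= sqrt PI.
Proof.
  assert (E : RInt g0 a b = A0 b - A0 a).
  { unfold A0. assert (H := RInt_Chasles (V:=R_CompleteNormedModule) g0 0 a b (exRInt_g0 _ _) (exRInt_g0 _ _)).
    unfold plus in H; simpl in H. apply plus_eq_sub; exact H. }
  rewrite E. pose proof (A0_sq a). pose proof (A0_sq b).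
  set (x := A0 b - A0 a).
  assert (x * x <= PI) by (unfold x; apply sq_aux; assumption).
  destruct (Rle_dec x 0). { pose proof (sqrt_pos PI). lra. }
  rewrite <- (sqrt_square x) by lra. apply sqrt_le_1_alt. lra.
Qed.

Lemma RInt_gauss_le a b : RInt gauss a b <= 1.
Proof.
  set (q := / sqrt 2).
  assert (Hs2 : 0 < sqrt 2) by (apply sqrt_lt_R0; lra).
  assert (Hq : q * q = / 2). { unfold q. rewrite <- Rinv_mult. rewrite sqrt_sqrt by lra. reflexivity. }
  assert (HP : 0 < sqrt (2 * PI)) by (apply sqrt_lt_R0; pose proof PI_RGT_0; lra).
  rewrite (RInt_ext _ (fun x => scal (sqrt 2 / sqrt (2 * PI)) (scal q (g0 (q * x + 0))))).
  2: { intros. unfold gauss, g0, scal; simpl; unfold mult; simpl.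
       replace (- ((q * x + 0) * (q * x + 0))) with (- (x*x) / 2).
       unfold q. field. split; lra.
       replace ((q * x + 0) * (q * x + 0)) with ((q*q) * (x*x)) by ring. rewrite Hq. field. }
  rewrite (RInt_scal (V:=R_CompleteNormedModule)). rewrite (RInt_comp_lin (V:=R_CompleteNormedModule)). 2: apply exRInt_g0.
  unfold scal; simpl; unfold mult; simpl.
  rewrite sqrt_mult by (pose proof PI_RGT_0; lra).
  pose proof (RInt_g0_le (q*a+0) (q*b+0)).
  assert (0 < sqrt PI) by (apply sqrt_lt_R0; apply PI_RGT_0).
  replace (sqrt 2 / (sqrt 2 * sqrt PI)) with (/ sqrt PI) by (field; lra).
  apply inv_le_aux; assumption.
  apply (ex_RInt_scal (V:=R_NormedModule)). apply (ex_RInt_continuous (V:=R_CompleteNormedModule)). intros.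
  apply (ex_derive_continuous (K:=R_AbsRing) (V:=R_NormedModule)).
  unfold g0, scal; simpl; unfold mult; simpl. auto_derive. exact I.
Qed.

Lemma cont_gauss x : continuous gauss x.
Proof. apply (ex_derive_continuous (K:=R_AbsRing) (V:=R_NormedModule)). unfold gauss. auto_derive. exact I. Qed.

Definition gint (f : R -> R) (M : R) := RInt (fun x => gauss x * f x) (-M) M.

Definition hgi (f : R -> R) (l : R) : Prop :=
  (forall M, 0 <= M -> ex_RInt (fun x => gauss x * f x) (-M) M) /\
  (forall eps, 0 < eps -> exists M0, 0 <= M0 /\ forall M, M0 <= M -> Rabs (gint f M - l) < eps).

Lemma hR_ex f a b l : has_RInt f a b l -> ex_RInt f a b /\ RInt f a b = l.
Proof. intros [pr H]. split. apply ex_RInt_Reals_1; exact pr. rewrite <- H. apply RInt_Reals. Qed.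

Lemma hR_mk f a b : ex_RInt f a b -> has_RInt f a b (RInt f a b).
Proof. intros H. exists (ex_RInt_Reals_0 _ _ _ H). symmetry. apply RInt_Reals. Qed.

Lemma hgi_has f l : hgi f l -> has_gauss_int f l.
Proof.
  intros [H1 H2]. exists (gint f). split.
  - intros M HM. apply hR_mk. apply H1; auto.
  - intros eps He. destruct (H2 eps He) as [M0 [_ HM]]. exists M0. exact HM.
Qed.

Lemma has_hgi f l : has_gauss_int f l -> hgi f l.
Proof.
  intros [V [H1 H2]]. split.
  - intros M HM. apply (hR_ex _ _ _ _ (H1 M HM)).
  - intros eps He. destruct (H2 eps He) as [M0 HM]. exists (Rmax M0 0). split. apply Rmax_r.
    intros M HM'. assert (0 <= M) by (pose proof (Rmax_r M0 0); lra).
    destruct (hR_ex _ _ _ _ (H1 M H)) as [_ E]. unfold gint. rewrite E.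
    apply HM. pose proof (Rmax_l M0 0); lra.
Qed.

Lemma hgi_ext f g l : (forall x, f x = g x) -> hgi f l -> hgi g l.
Proof.
  intros E [H1 H2]. assert (Ef : forall M, gint f M = gint g M).
  { intros; unfold gint. apply RInt_ext. intros; rewrite E; auto. }
  split.
  - intros M HM. eapply ex_RInt_ext. 2: apply (H1 M HM). intros; simpl; rewrite E; auto.
  - intros eps He. destruct (H2 eps He) as [M0 [? HM]]. exists M0. split; auto. intros. rewrite <- Ef. auto.
Qed.

Lemma hgi_plus f g a b : hgi f a -> hgi g b -> hgi (fun x => f x + g x) (a + b).
Proof.
  intros [F1 F2] [G1 G2]. split.
  - intros M HM. eapply ex_RInt_ext. 2: apply (ex_RInt_plus _ _ _ _ (F1 M HM) (G1 M HM)).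
    intros; simpl. unfold plus; simpl. ring.
  - intros eps He. destruct (F2 (eps/2)) as [M1 [? HM1]]. lra. destruct (G2 (eps/2)) as [M2 [? HM2]]. lra.
    exists (Rmax M1 M2). split. pose proof (Rmax_l M1 M2); lra.
    intros M HM. pose proof (Rmax_l M1 M2); pose proof (Rmax_r M1 M2).
    assert (E : gint (fun x => f x + g x) M = gint f M + gint g M).
    { unfold gint. rewrite <- (plus_eq_sub2 _ _ _ (RInt_plus (V:=R_CompleteNormedModule) _ _ _ _ (F1 M ltac:(lra)) (G1 M ltac:(lra)))).
      apply RInt_ext. intros; unfold plus; simpl; ring. }
    rewrite E. specialize (HM1 M ltac:(lra)). specialize (HM2 M ltac:(lra)).
    apply abs_tri_aux; assumption.
Qed.

Lemma hgi_scal f a k : hgi f a -> hgi (fun x => k * f x) (k * a).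
Proof.
  intros [F1 F2]. split.
  - intros M HM. eapply ex_RInt_ext. 2: apply (ex_RInt_scal (V:=R_NormedModule) _ _ _ k (F1 M HM)).
    intros; simpl. unfold scal; simpl; unfold mult; simpl. ring.
  - intros eps He.
    assert (E : forall M, 0 <= M -> gint (fun x => k * f x) M = k * gint f M).
    { intros M HM. unfold gint. rewrite <- (RInt_scalR _ _ _ k (F1 M HM)).
      apply RInt_extR. intros; ring. }
    destruct (F2 (eps / (Rabs k + 1))) as [M0 [? HM]].
    { apply Rdiv_lt_0_compat; auto. pose proof (Rabs_pos k); lra. }
    exists M0. split; auto. intros M HM'. rewrite E by lra.
    specialize (HM M HM').
    replace (k * gint f M - k * a) with (k * (gint f M - a)) by ring. rewrite Rabs_mult.
    pose proof (Rabs_pos k). pose proof (Rabs_pos (gint f M - a)).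
    assert (Rabs (gint f M - a) * (Rabs k + 1) < eps).
    { apply (Rmult_lt_compat_r (Rabs k + 1)) in HM. 2: lra.
      unfold Rdiv in HM. rewrite Rmult_assoc, Rinv_l in HM by lra. lra. }
    nra.
Qed.

Lemma lim_le_aux (u v : R -> R) a b :
  (forall M, 0 <= M -> u M <= v M) ->
  (forall eps, 0 < eps -> exists M0, 0 <= M0 /\ forall M, M0 <= M -> Rabs (u M - a) < eps) ->
  (forall eps, 0 < eps -> exists M0, 0 <= M0 /\ forall M, M0 <= M -> Rabs (v M - b) < eps) ->
  a <= b.
Proof.
  intros H Ha Hb. destruct (Rle_dec a b) as [|Hn]; auto.
  set (e := (a - b) / 2). assert (He : 0 < e) by (unfold e; lra).
  destruct (Ha e He) as [M1 [Q1 K1]]. destruct (Hb e He) as [M2 [Q2 K2]].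
  set (M := Rmax M1 M2). pose proof (Rmax_l M1 M2) as R1. pose proof (Rmax_r M1 M2) as R2.
  specialize (K1 M ltac:(unfold M; lra)). specialize (K2 M ltac:(unfold M; lra)).
  specialize (H M ltac:(unfold M; lra)).
  apply Rabs_def2 in K1. apply Rabs_def2 in K2. unfold e in *. lra.
Qed.

Lemma hgi_le f g a b : (forall x, f x <= g x) -> hgi f a -> hgi g b -> a <= b.
Proof.
  intros Hfg [F1 F2] [G1 G2]. apply (lim_le_aux (gint f) (gint g)); auto.
  intros M HM. unfold gint. apply RInt_le; auto. lra.
  intros. apply Rmult_le_compat_l. unfold gauss. apply Rlt_le. apply Rdiv_lt_0_compat. apply exp_pos.
  apply sqrt_lt_R0. pose proof PI_RGT_0. lra. auto.
Qed.

Lemma gauss_pos x : 0 < gauss x.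
Proof. unfold gauss. apply Rdiv_lt_0_compat. apply exp_pos. apply sqrt_lt_R0. pose proof PI_RGT_0. lra. Qed.

Lemma exRInt_cont f a b : (forall x, continuous f x) -> ex_RInt (fun x => gauss x * f x) a b.
Proof.
  intros Hc. apply (ex_RInt_continuous (V:=R_CompleteNormedModule)). intros.
  apply (continuous_mult (K:=R_AbsRing) gauss f). apply cont_gauss. apply Hc.
Qed.

Lemma gint_mono f M M' : (forall x, continuous f x) -> (forall x, 0 <= f x) -> 0 <= M -> M <= M' -> gint f M <= gint f M'.
Proof.
  intros Hc Hp HM HM'. unfold gint.
  assert (P : forall a b, a <= b -> 0 <= RInt (fun x => gauss x * f x) a b).
  { intros a b Hab. apply RInt_ge_0; auto. apply exRInt_cont; auto.
    intros. apply Rmult_le_pos. apply Rlt_le, gauss_pos. auto. }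
  assert (C1 := RInt_ChaslesR (fun x => gauss x * f x) (-M') (-M) M' (exRInt_cont _ _ _ Hc) (exRInt_cont _ _ _ Hc)).
  assert (C2 := RInt_ChaslesR (fun x => gauss x * f x) (-M) M M' (exRInt_cont _ _ _ Hc) (exRInt_cont _ _ _ Hc)).
  pose proof (P (-M') (-M) ltac:(lra)). pose proof (P M M' ltac:(lra)).
  lra.
Qed.

Lemma gint_ge0 f M : (forall x, continuous f x) -> (forall x, 0 <= f x) -> 0 <= M -> 0 <= gint f M.
Proof.
  intros Hc Hp HM. unfold gint. apply RInt_ge_0. lra. apply exRInt_cont; auto.
  intros. apply Rmult_le_pos. apply Rlt_le, gauss_pos. auto.
Qed.

Lemma MB f B : (forall x, continuous f x) -> (forall x, 0 <= f x) -> (forall M, 0 <= M -> gint f M <= B) ->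
  exists l, 0 <= l /\ l <= B /\ hgi f l.
Proof.
  intros Hc Hp HB.
  set (E := fun y => exists M, 0 <= M /\ y = gint f M).
  destruct (completeness E) as [l [Hub Hlub]].
  { exists B. intros y [M [HM ->]]. auto. }
  { exists (gint f 0). exists 0. split; auto; lra. }
  assert (G0 : gint f 0 <= l) by (apply Hub; exists 0; split; auto; lra).
  exists l. split. pose proof (gint_ge0 f 0 Hc Hp ltac:(lra)). lra.
  split. apply Hlub. intros y [M [HM ->]]. auto.
  split. intros; apply exRInt_cont; auto.
  intros eps He.
  destruct (classic (exists M0, 0 <= M0 /\ l - eps < gint f M0)) as [[M0 [H0 H1]]|Hn].
  - exists M0. split; auto. intros M HM.
    assert (gint f M0 <= gint f M) by (apply gint_mono; auto).
    assert (gint f M <= l) by (apply Hub; exists M; split; auto; lra).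
    apply Rabs_def1; lra.
  - exfalso. assert (l <= l - eps). apply Hlub. intros y [M [HM ->]].
    destruct (Rle_dec (gint f M) (l - eps)); auto. exfalso; apply Hn. exists M. split; auto; lra.
    lra.
Qed.

Lemma gint_le_lim f l M : (forall x, continuous f x) -> (forall x, 0 <= f x) -> hgi f l -> 0 <= M -> gint f M <= l.
Proof.
  intros Hc Hp [_ H2] HM. destruct (Rle_dec (gint f M) l) as [|Hn]; auto. exfalso.
  destruct (H2 (gint f M - l)) as [M0 [? HM0]]. lra.
  specialize (HM0 (Rmax M0 M) (Rmax_l _ _)).
  assert (gint f M <= gint f (Rmax M0 M)) by (apply gint_mono; auto; apply Rmax_r).
  apply Rabs_def2 in HM0. lra.
Qed.

Lemma gauss_mass : exists c, 0 <= c /\ c <= 1 /\ hgi (fun _ => 1) c.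
Proof.
  destruct (MB (fun _ => 1) 1) as [l [? [? ?]]].
  - intros; apply continuous_const.
  - intros; lra.
  - intros M HM. unfold gint. rewrite (RInt_extR _ gauss) by (intros; ring). apply RInt_gauss_le.
  - exists l; auto.
Qed.

Lemma exp_moment t : exists J, 0 <= J /\ J <= exp (t * t / 2) /\ hgi (fun x => exp (t * x)) J.
Proof.
  apply MB.
  - intros. apply cont_of_der. auto_derive. exact I.
  - intros; apply Rlt_le, exp_pos.
  - intros M HM. unfold gint.
    rewrite (RInt_extR _ (fun x => exp (t*t/2) * (1 * gauss (1 * x + - t)))).
    2: { intros. unfold gauss. replace (- ((1 * x + - t) * (1 * x + - t)) / 2) with (- (x*x)/2 + t * x + - (t*t/2)) by field.
         rewrite !exp_plus. rewrite exp_Ropp. field. split. apply Rgt_not_eq, exp_pos.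
         apply Rgt_not_eq, sqrt_lt_R0. pose proof PI_RGT_0; lra. }
    rewrite RInt_scalR. rewrite RInt_comp_linR.
    pose proof (RInt_gauss_le (1 * - M + - t) (1 * M + - t)). pose proof (exp_pos (t*t/2)).
    rewrite <- (Rmult_1_r (exp (t*t/2))) at 2. apply Rmult_le_compat_l; lra.
    apply ex_RInt_contR; apply cont_gauss.
    apply ex_RInt_scalR. apply ex_RInt_contR. intros. apply cont_of_der. unfold gauss. auto_derive. exact I.
Qed.

Definition cG : R := proj1_sig (constructive_indefinite_description _ gauss_mass).

Lemma cG_spec : 0 <= cG /\ cG <= 1 /\ hgi (fun _ => 1) cG.
Proof. unfold cG. destruct (constructive_indefinite_description _ gauss_mass) as [c Hc]. simpl. exact Hc. Qed.

Lemma hgi_const k : hgi (fun _ => k) (k * cG).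
Proof.
  destruct cG_spec as [_ [_ H]]. apply (hgi_ext (fun x => k * 1)). intros; ring. apply hgi_scal; auto.
Qed.

Lemma cont_exp_lin t x : continuous (fun x => exp (t * x)) x.
Proof. apply cont_of_der. auto_derive. exact I. Qed.

Lemma hgi_bound f A B : (forall x, continuous f x) -> 0 <= A -> 0 <= B ->
  (forall x, Rabs (f x) <= A + B * (exp x + exp (- x))) -> exists l, hgi f l.
Proof.
  intros Hc HA HB Hb.
  set (phi := fun x => A + B * (exp (1 * x) + exp (-1 * x))).
  assert (Hphi : exists lp, hgi phi lp).
  { destruct (exp_moment 1) as [J1 [_ [_ H1]]]. destruct (exp_moment (-1)) as [J2 [_ [_ H2]]].
    exists (A * cG + B * (J1 + J2)). apply hgi_plus. apply hgi_const. apply hgi_scal. apply hgi_plus; auto. }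
  destruct Hphi as [lp Hlp].
  assert (Cphi : forall x, continuous phi x).
  { intros. unfold phi. apply cont_plusR. apply continuous_const. apply cont_multR. apply continuous_const.
    apply cont_plusR; apply cont_exp_lin. }
  assert (Pphi : forall x, Rabs (f x) <= phi x).
  { intros. unfold phi. rewrite !Rmult_1_l. replace (-1 * x) with (-x) by ring. auto. }
  assert (Cs : forall x, continuous (fun x => f x + phi x) x). { intros; apply cont_plusR; auto. }
  assert (Ps : forall x, 0 <= f x + phi x). { intros. pose proof (Pphi x). apply Rabs_def2b in H. lra. }
  destruct (MB (fun x => f x + phi x) (2 * lp)) as [l1 [_ [_ H1]]]; auto.
  { intros M HM. apply Rle_trans with (gint (fun x => 2 * phi x) M).
    unfold gint. apply RInt_le. lra. apply exRInt_cont; auto. apply exRInt_cont.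
    intros; apply cont_multR; auto. apply continuous_const.
    intros. apply Rmult_le_compat_l. apply Rlt_le, gauss_pos. pose proof (Pphi x). apply Rabs_def2b in H0. lra.
    unfold gint. rewrite (RInt_extR _ (fun x => 2 * (gauss x * phi x))) by (intros; ring).
    rewrite RInt_scalR. fold (gint phi M). pose proof (gint_le_lim phi lp M Cphi) as Q.
    assert (gint phi M <= lp). apply Q; auto. intros. pose proof (Pphi x). pose proof (Rabs_pos (f x)). lra.
    lra. apply exRInt_cont; auto. }
  exists (l1 + -1 * lp). apply (hgi_ext (fun x => (f x + phi x) + -1 * phi x)). intros; ring.
  apply hgi_plus; auto. apply hgi_scal; auto.
Qed.

Lemma GE_ext m : forall f g l, (forall v, f v = g v) -> gauss_expect m f l -> gauss_expect m g l.
Proof.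
  induction m; simpl; intros f g l E H.
  - rewrite H; auto.
  - destruct H as [h [H1 H2]]. exists h. split; auto. intros x. apply (IHm _ _ _ (fun v => E (vcons x v))). auto.
Qed.

Lemma GE_plus m : forall f g a b, gauss_expect m f a -> gauss_expect m g b ->
  gauss_expect m (fun v => f v + g v) (a + b).
Proof.
  induction m; simpl; intros f g a b Hf Hg.
  - subst; auto.
  - destruct Hf as [h1 [F1 F2]]. destruct Hg as [h2 [G1 G2]].
    exists (fun x => h1 x + h2 x). split. intros x. apply IHm; auto.
    apply hgi_has. apply hgi_plus; apply has_hgi; auto.
Qed.

Lemma GE_scal m : forall f a k, gauss_expect m f a -> gauss_expect m (fun v => k * f v) (k * a).
Proof.
  induction m; simpl; intros f a k Hf.
  - subst; auto.
  - destruct Hf as [h1 [F1 F2]].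
    exists (fun x => k * h1 x). split. intros x. apply IHm; auto.
    apply hgi_has. apply hgi_scal; apply has_hgi; auto.
Qed.

Lemma GE_const m : forall k, gauss_expect m (fun _ => k) (k * cG ^ m).
Proof.
  induction m; simpl; intros k.
  - ring.
  - exists (fun _ => k * cG ^ m). split. intros; apply IHm.
    apply hgi_has. apply (hgi_ext _ _ _ (fun _ => eq_refl)). replace (k * (cG * cG ^ m)) with ((k * cG ^ m) * cG) by ring.
    apply hgi_const.
Qed.

Lemma GE_le m : forall f g a b, (forall v, f v <= g v) -> gauss_expect m f a -> gauss_expect m g b -> a <= b.
Proof.
  induction m; simpl; intros f g a b Hfg Hf Hg.
  - subst; auto.
  - destruct Hf as [h1 [F1 F2]]. destruct Hg as [h2 [G1 G2]].
    apply (hgi_le h1 h2); try (apply has_hgi; auto).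
    intros x. apply (IHm (fun v => f (vcons x v)) (fun v => g (vcons x v))); auto.
Qed.

Lemma cG_pow m : 0 <= cG ^ m <= 1.
Proof.
  destruct cG_spec as [H0 [H1 _]]. split. apply pow_le; auto.
  induction m; simpl. lra. nra.
Qed.

Lemma sumR_S k f : sumR (S k) f = f 0%nat + sumR k (fun i => f (S i)).
Proof. induction k; simpl in *. ring. rewrite IHk. ring. Qed.

Lemma sumR_ext_lt n f g : (forall i, (i < n)%nat -> f i = g i) -> sumR n f = sumR n g.
Proof. induction n; simpl; intros H. auto. rewrite IHn by (intros; apply H; lia). rewrite H by lia. auto. Qed.

Lemma sumR_ext n f g : (forall i, f i = g i) -> sumR n f = sumR n g.
Proof. intros; apply sumR_ext_lt; auto. Qed.

Lemma sumR_zero n : sumR n (fun _ => 0) = 0.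
Proof. induction n; simpl; auto. rewrite IHn; ring. Qed.

Lemma abs_le_exps x : Rabs x <= exp x + exp (- x).
Proof.
  pose proof (exp_ineq1_le x). pose proof (exp_ineq1_le (-x)). pose proof (exp_pos x). pose proof (exp_pos (-x)).
  apply Rabs_le_intro. lra.
Qed.

Lemma lip_cont (h : R -> R) K : 0 <= K -> (forall x y, Rabs (h x - h y) <= K * Rabs (x - y)) -> forall x, continuous h x.
Proof.
  intros HK Hl x. apply continuity_pt_filterlim.
  intros eps He. exists (eps / (K + 1)). split. apply Rdiv_lt_0_compat; lra.
  intros y [_ Hy]. unfold dist in *; simpl in *; unfold R_dist in *.
  pose proof (Hl y x). pose proof (Rabs_pos (y - x)).
  apply Rle_lt_trans with (K * Rabs (y - x)). auto.
  apply Rle_lt_trans with ((K+1) * Rabs (y - x)). nra.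
  apply (Rmult_lt_compat_l (K+1)) in Hy. 2: lra. unfold Rdiv in Hy. rewrite <- Rmult_assoc in Hy.
  rewrite Rmult_comm with (r2 := eps) in Hy. rewrite Rmult_assoc, Rinv_r in Hy by lra. lra.
Qed.

Lemma choice_R (P : R -> R -> Prop) : (forall x, exists y, P x y) -> exists h : R -> R, forall x, P x (h x).
Proof.
  intros H. exists (fun x => proj1_sig (constructive_indefinite_description _ (H x))).
  intros x. destruct (constructive_indefinite_description _ (H x)); simpl; auto.
Qed.

Lemma LipE m : forall K g, 0 <= K ->
  (forall v w, Rabs (g v - g w) <= K * sumR m (fun i => Rabs (v i - w i))) ->
  exists l, gauss_expect m g l.
Proof.
  induction m; intros K g HK Hg.
  - exists (g (fun _ => 0)). simpl; auto.
  - assert (Hx : forall x, exists l, gauss_expect m (fun v => g (vcons x v)) l).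
    { intros x. apply (IHm K); auto. intros v w. specialize (Hg (vcons x v) (vcons x w)).
      rewrite sumR_S in Hg. simpl in Hg. replace (x - x) with 0 in Hg by ring. rewrite Rabs_R0, Rplus_0_l in Hg. auto. }
    destruct (choice_R _ Hx) as [h Hh].
    assert (Hl : forall x y, Rabs (h x - h y) <= K * Rabs (x - y)).
    { assert (D : forall x y, h x - h y <= K * Rabs (x - y)).
      { intros x y.
        assert (Pw : forall v, g (vcons x v) + -1 * g (vcons y v) <= K * Rabs (x - y)).
        { intros v. specialize (Hg (vcons x v) (vcons y v)). rewrite sumR_S in Hg. simpl in Hg.
          rewrite (sumR_ext m _ (fun _ => 0)) in Hg. rewrite sumR_zero, Rplus_0_r in Hg.
          apply Rabs_def2b in Hg. lra. intros; replace (v i - v i) with 0 by ring; apply Rabs_R0. }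
        assert (E1 := GE_plus m _ _ _ _ (Hh x) (GE_scal m _ _ (-1) (Hh y))).
        assert (E2 := GE_const m (K * Rabs (x - y))).
        assert (Le := GE_le m _ _ _ _ Pw E1 E2).
        pose proof (cG_pow m). pose proof (Rabs_pos (x - y)).
        assert (K * Rabs (x - y) * cG ^ m <= K * Rabs (x - y)). { rewrite <- (Rmult_1_r (K * Rabs (x-y))) at 2. apply Rmult_le_compat_l; nra. }
        lra. }
      intros x y. apply Rabs_le_intro. pose proof (D x y). pose proof (D y x). rewrite Rabs_minus_sym in H0. lra. }
    assert (Hc := lip_cont h K HK Hl).
    destruct (hgi_bound h (Rabs (h 0)) K) as [l Hl']; auto. apply Rabs_pos.
    { intros x. pose proof (Hl x 0). pose proof (abs_le_exps x). rewrite Rminus_0_r in H.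
      pose proof (Rabs_triang_inv (h x) (h 0)). nra. }
    exists l. simpl. exists h. split; auto. apply hgi_has; auto.
Qed.

Lemma GE_exp m : forall w, exists l, 0 <= l /\ l <= exp (sumR m (fun i => w i * w i) / 2) /\
  gauss_expect m (fun v => exp (sumR m (fun i => w i * v i))) l.
Proof.
  induction m; intros w.
  - exists 1. simpl. rewrite !Rdiv_0_l, exp_0. split; [lra|split;[lra|auto]].
  - destruct (IHm (fun i => w (S i))) as [l' [P1 [P2 P3]]].
    destruct (exp_moment (w 0%nat)) as [J [J1 [J2 J3]]].
    exists (l' * J). split. nra. split.
    + rewrite sumR_S. replace ((w 0%nat * w 0%nat + sumR m (fun i => w (S i) * w (S i))) / 2)
        with (sumR m (fun i => w (S i) * w (S i)) / 2 + w 0%nat * w 0%nat / 2) by field.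
      rewrite exp_plus. apply Rmult_le_compat; auto.
    + cbn [gauss_expect]. exists (fun x => exp (w 0%nat * x) * l'). split.
      * intros x. apply (GE_ext m (fun v => exp (w 0%nat * x) * exp (sumR m (fun i => w (S i) * v i)))).
        intros v. rewrite sumR_S. simpl. rewrite exp_plus. auto.
        apply GE_scal; auto.
      * apply hgi_has. apply (hgi_ext (fun x => l' * exp (w 0%nat * x))). intros; ring. apply hgi_scal; auto.
Qed.

Lemma sumR_add p b F : sumR (p + b) F = sumR p F + sumR b (fun j => F (p + j)%nat).
Proof. induction b; simpl. rewrite Nat.add_0_r. ring. rewrite Nat.add_succ_r. simpl. rewrite IHb. ring. Qed.

Lemma sumR_mul a b F : sumR (a * b) F = sumR a (fun i => sumR b (fun j => F (i * b + j)%nat)).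
Proof. induction a; simpl. auto. rewrite Nat.add_comm. rewrite sumR_add. rewrite IHa. auto. Qed.

Lemma sumR_plus n f g : sumR n (fun i => f i + g i) = sumR n f + sumR n g.
Proof. induction n; simpl. ring. rewrite IHn; ring. Qed.

Lemma sumR_minus n f g : sumR n f - sumR n g = sumR n (fun i => f i - g i).
Proof. induction n; simpl. ring. rewrite <- IHn; ring. Qed.

Lemma sumR_le n f g : (forall i, f i <= g i) -> sumR n f <= sumR n g.
Proof. induction n; simpl; intros H. lra. specialize (IHn H). specialize (H n). lra. Qed.

Lemma sumR_abs n f : Rabs (sumR n f) <= sumR n (fun i => Rabs (f i)).
Proof. induction n; simpl. rewrite Rabs_R0; lra. eapply Rle_trans. apply Rabs_triang. lra. Qed.

Definition cf (n : nat) (z : list R) (k : nat) : R :=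
  if Nat.ltb (k / n) (k mod n) then nth (k / n) z 0 * nth (k mod n) z 0 else 0.

Lemma qform_lin n v z : qform n v z = sumR (n * n) (fun k => cf n z k * v k).
Proof.
  rewrite sumR_mul. unfold qform. apply sumR_ext_lt. intros i Hi. apply sumR_ext_lt. intros j Hj.
  assert (D : ((i * n + j) / n = i)%nat). { symmetry. apply (Nat.div_unique _ _ _ j); lia. }
  assert (Mo : ((i * n + j) mod n = j)%nat). { symmetry. apply (Nat.mod_unique _ _ i j); lia. }
  unfold cf, entry. rewrite D, Mo. destruct (Nat.ltb i j); ring.
Qed.

Lemma signs_entries n : forall z, In z (signs n) -> forall i, Rabs (nth i z 0) <= 1.
Proof.
  induction n; simpl; intros z Hz i.
  - destruct Hz as [<-|[]]. destruct i; simpl; rewrite Rabs_R0; lra.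
  - apply in_app_or in Hz. destruct Hz as [Hz|Hz]; apply in_map_iff in Hz; destruct Hz as [z' [<- Hz']];
    destruct i; simpl; auto; unfold Rabs; destruct Rcase_abs; lra.
Qed.

Lemma signs_ne n : signs n <> [].
Proof.
  induction n; simpl. discriminate. destruct (signs n). contradiction. simpl. discriminate.
Qed.

Lemma signs_len n : length (signs n) = (2 ^ n)%nat.
Proof. induction n; simpl; auto. rewrite length_app, !length_map, IHn. lia. Qed.

Lemma cf_le n z k : (forall i, Rabs (nth i z 0) <= 1) -> Rabs (cf n z k) <= 1.
Proof.
  intros H. unfold cf. destruct (Nat.ltb _ _). rewrite Rabs_mult.
  pose proof (H (k/n)%nat). pose proof (H (k mod n)%nat). pose proof (Rabs_pos (nth (k/n) z 0)).
  pose proof (Rabs_pos (nth (k mod n) z 0)). nra. rewrite Rabs_R0; lra.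
Qed.

Lemma qform_lip n z v w : In z (signs n) ->
  Rabs (qform n v z - qform n w z) <= sumR (n * n) (fun k => Rabs (v k - w k)).
Proof.
  intros Hz. rewrite !qform_lin.
  replace (sumR (n*n) (fun k => cf n z k * v k) - sumR (n*n) (fun k => cf n z k * w k))
    with (sumR (n*n) (fun k => cf n z k * (v k - w k))).
  2: { rewrite sumR_minus. apply sumR_ext. intros; ring. }
  eapply Rle_trans. apply sumR_abs. apply sumR_le. intros k. rewrite Rabs_mult.
  pose proof (cf_le n z k (signs_entries n z Hz)). pose proof (Rabs_pos (v k - w k)).
  pose proof (Rabs_pos (cf n z k)). nra.
Qed.

Lemma Rmin_lip a b c d D : Rabs (a - b) <= D -> Rabs (c - d) <= D -> Rabs (Rmin a c - Rmin b d) <= D.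
Proof.
  intros H1 H2. apply Rabs_def2b in H1. apply Rabs_def2b in H2. apply Rabs_le_intro.
  unfold Rmin; destruct (Rle_dec a c); destruct (Rle_dec b d); lra.
Qed.

Lemma fold_min_lip (f g : list R -> R) D L : forall a b, Rabs (a - b) <= D ->
  (forall z, In z L -> Rabs (f z - g z) <= D) ->
  Rabs (fold_left Rmin (map f L) a - fold_left Rmin (map g L) b) <= D.
Proof.
  induction L; simpl; intros x y H1 H2; auto.
  apply IHL. apply Rmin_lip; auto. intros; auto.
Qed.

Lemma min_list_lip (f g : list R -> R) D L : 0 <= D -> (forall z, In z L -> Rabs (f z - g z) <= D) ->
  Rabs (min_list (map f L) - min_list (map g L)) <= D.
Proof.
  intros HD H. destruct L as [|z L]; simpl. rewrite Rminus_0_r, Rabs_R0; auto.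
  apply fold_min_lip. apply H; simpl; auto. intros; apply H; simpl; auto.
Qed.

Lemma fold_min_ge (f : list R -> R) B L : forall a, B <= a -> (forall z, In z L -> B <= f z) ->
  B <= fold_left Rmin (map f L) a.
Proof.
  induction L; simpl; intros x H1 H2; auto. apply IHL; auto. unfold Rmin; destruct Rle_dec; auto.
Qed.

Lemma min_list_ge (f : list R -> R) B L : L <> [] -> (forall z, In z L -> B <= f z) -> B <= min_list (map f L).
Proof.
  intros Hn H. destruct L as [|z L]. contradiction. simpl. apply fold_min_ge. apply H; simpl; auto. intros; apply H; simpl; auto.
Qed.

Lemma sumR_abs_nonneg n f : 0 <= sumR n (fun i => Rabs (f i)).
Proof. induction n; simpl. lra. pose proof (Rabs_pos (f n)). lra. Qed.

Lemma min_qform_lip n v w : Rabs (min_qform n v - min_qform n w) <= 1 * sumR (n * n) (fun k => Rabs (v k - w k)).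
Proof.
  rewrite Rmult_1_l. unfold min_qform. apply min_list_lip. apply sumR_abs_nonneg.
  intros z Hz. apply qform_lip; auto.
Qed.

Lemma min_qform_exists n : exists l, gauss_expect (n * n) (min_qform n) l.
Proof. apply (LipE (n * n) 1). lra. intros. apply min_qform_lip. Qed.

Fixpoint sumL (L : list (list R)) (F : list R -> R) : R :=
  match L with [] => 0 | z :: L' => F z + sumL L' F end.

Lemma sumL_ge L F z : In z L -> (forall z, 0 < F z) -> F z <= sumL L F.
Proof.
  induction L; simpl; intros Hz Hp. contradiction.
  assert (0 <= sumL L F). { clear IHL Hz. induction L; simpl. lra. pose proof (Hp a0). lra. }
  destruct Hz as [->|Hz]. lra. specialize (IHL Hz Hp). pose proof (Hp a). lra.
Qed.

Lemma sumL_pos L F : L <> [] -> (forall z, 0 < F z) -> 0 < sumL L F.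
Proof.
  intros Hn Hp. destruct L as [|z L]. contradiction. simpl.
  assert (0 <= sumL L F). { clear Hn. induction L; simpl. lra. pose proof (Hp a). lra. }
  pose proof (Hp z). lra.
Qed.

Lemma GE_sumL m B (F : list R -> (nat -> R) -> R) L :
  (forall z, In z L -> exists e, e <= B /\ gauss_expect m (F z) e) ->
  exists Et, Et <= INR (length L) * B /\ gauss_expect m (fun v => sumL L (fun z => F z v)) Et.
Proof.
  induction L; intros H.
  - exists 0. split. simpl; lra. apply (GE_ext m (fun _ => 0)). intros; reflexivity.
    assert (G0 := GE_const m 0). rewrite Rmult_0_l in G0. exact G0.
  - destruct IHL as [E1 [H1 H2]]. intros; apply H; simpl; auto.
    destruct (H a) as [e [He1 He2]]. simpl; auto.
    exists (e + E1). split. rewrite length_cons, S_INR. lra.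
    apply (GE_ext m (fun v => F a v + sumL L (fun z => F z v))). intros; reflexivity. apply GE_plus; auto.
Qed.

Lemma sumR_scal n c f : sumR n (fun i => c * f i) = c * sumR n f.
Proof. induction n; simpl. ring. rewrite IHn; ring. Qed.

Lemma sumR_const n c : sumR n (fun _ => c) = INR n * c.
Proof. induction n; simpl sumR. simpl; ring. rewrite IHn, S_INR; ring. Qed.

Definition Tn n := sumR n (fun i => sumR n (fun j => if Nat.ltb i j then 1 else 0)).

Lemma sumR_Sr n f : sumR (S n) f = sumR n f + f n.
Proof. reflexivity. Qed.

Lemma Tn_val n : 2 * Tn n + INR n = INR n * INR n.
Proof.
  induction n. simpl. unfold Tn; simpl. ring.
  assert (E : Tn (S n) = Tn n + INR n).
  { unfold Tn. rewrite (sumR_ext (S n) _ (fun i => sumR n (fun j => if Nat.ltb i j then 1 else 0) + (if Nat.ltb i n then 1 else 0))).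
    2: { intros; apply sumR_Sr. }
    rewrite sumR_plus. rewrite !sumR_Sr.
    rewrite (sumR_ext_lt n (fun j => if Nat.ltb n j then 1 else 0) (fun _ => 0)).
    2: { intros j Hj. destruct (Nat.ltb n j) eqn:E; auto. apply Nat.ltb_lt in E. lia. }
    rewrite (sumR_ext_lt n (fun i => if Nat.ltb i n then 1 else 0) (fun _ => 1)).
    2: { intros i Hi. apply Nat.ltb_lt in Hi. rewrite Hi. auto. }
    rewrite sumR_zero, sumR_const. rewrite Nat.ltb_irrefl. ring. }
  rewrite E, S_INR. lra.
Qed.

Lemma sumR_le_lt n f g : (forall i, (i < n)%nat -> f i <= g i) -> sumR n f <= sumR n g.
Proof. induction n; simpl; intros H. lra. assert (sumR n f <= sumR n g) by (apply IHn; intros; apply H; lia).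
  specialize (H n ltac:(lia)). lra. Qed.

Lemma cf_sq n z : In z (signs n) -> sumR (n * n) (fun k => cf n z k * cf n z k) <= Tn n.
Proof.
  intros Hz. rewrite sumR_mul. unfold Tn. apply sumR_le_lt. intros i Hi. apply sumR_le_lt. intros j Hj.
  assert (D : ((i * n + j) / n = i)%nat). { symmetry. apply (Nat.div_unique _ _ _ j); lia. }
  assert (Mo : ((i * n + j) mod n = j)%nat). { symmetry. apply (Nat.mod_unique _ _ i j); lia. }
  unfold cf. rewrite D, Mo. destruct (Nat.ltb i j). 2: lra.
  pose proof (signs_entries n z Hz i). pose proof (signs_entries n z Hz j).
  apply Rabs_def2b in H. apply Rabs_def2b in H0.
  assert (nth i z 0 * nth i z 0 <= 1) by nra. assert (nth j z 0 * nth j z 0 <= 1) by nra.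
  assert (0 <= nth i z 0 * nth i z 0) by nra. assert (0 <= nth j z 0 * nth j z 0) by nra.
  replace (nth i z 0 * nth j z 0 * (nth i z 0 * nth j z 0)) with ((nth i z 0 * nth i z 0) * (nth j z 0 * nth j z 0)) by ring.
  nra.
Qed.

Lemma exp_q n lam z : In z (signs n) ->
  exists e, e <= exp (lam * lam * (INR n * INR n) / 4) /\ gauss_expect (n * n) (fun v => exp (- lam * qform n v z)) e.
Proof.
  intros Hz. destruct (GE_exp (n * n) (fun k => - lam * cf n z k)) as [l [_ [H1 H2]]].
  exists l. split.
  - eapply Rle_trans. apply H1. apply exp_le_mono.
    rewrite (sumR_ext _ _ (fun k => (lam * lam) * (cf n z k * cf n z k))) by (intros; ring).
    rewrite sumR_scal. pose proof (cf_sq n z Hz). pose proof (Tn_val n).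
    assert (0 <= lam * lam) by nra. pose proof (pos_INR n).
    assert (HS : sumR (n * n) (fun k => cf n z k * cf n z k) <= INR n * INR n / 2) by lra.
    apply (Rmult_le_compat_l (lam * lam)) in HS; auto. lra.
  - eapply GE_ext. 2: apply H2. intros v. simpl. rewrite qform_lin.
    rewrite (sumR_ext _ _ (fun k => - lam * (cf n z k * v k))) by (intros; ring).
    rewrite sumR_scal. auto.
Qed.

Lemma ln2_le : ln 2 <= 6938/10000.
Proof.
  assert (H := exp_ge_taylor (6938/10000) 5 ltac:(lra)).
  simpl in H.
  assert (2 <= exp (6938/10000)) by lra.
  rewrite <- (ln_exp (6938/10000)). destruct (Rle_lt_or_eq_dec _ _ H0).
  left; apply ln_increasing; lra. rewrite e; lra.
Qed.

Lemma ln_le_mono x y : 0 < x -> x <= y -> ln x <= ln y.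
Proof. intros Hx H. destruct (Rle_lt_or_eq_dec _ _ H). left; apply ln_increasing; auto. subst; lra. Qed.

Lemma ln_le_lin S a : 0 < S -> 0 < a -> ln S <= S / a + ln a - 1.
Proof.
  intros HS Ha. pose proof (exp_ineq1_le (ln (S / a))). rewrite exp_ln in H by (apply Rdiv_lt_0_compat; auto).
  unfold Rdiv in H. rewrite ln_mult in H by (auto; apply Rinv_0_lt_compat; auto).
  rewrite ln_Rinv in H by auto. unfold Rdiv. lra.
Qed.

Theorem lemma4 (n : nat) (hn : (1 <= n)%nat) :
  exists l : R,
    gauss_expect (n * n) (min_qform n) l /\
    l >= - (601 / 1000) * sqrt (INR n) - (833 / 1000) * (INR n * sqrt (INR n)).
Proof.
  assert (Hn : 1 <= INR n) by (apply (le_INR 1); auto).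
  set (s := sqrt (INR n)).
  assert (Hs : 0 < s) by (apply sqrt_lt_R0; lra).
  assert (Hss : s * s = INR n) by (apply sqrt_sqrt; lra).
  set (lam := (5/3) / s).
  assert (Hlam : 0 < lam) by (unfold lam; apply Rdiv_lt_0_compat; lra).
  set (beta := lam * lam * (INR n * INR n) / 4).
  assert (Hbeta : beta = 25 * INR n / 36).
  { unfold beta, lam. rewrite <- Hss. field. lra. }
  set (a := 2 ^ n * exp beta).
  assert (Ha : 0 < a) by (unfold a; apply Rmult_lt_0_compat; [apply pow_lt; lra | apply exp_pos]).
  assert (Hlna : ln a = INR n * ln 2 + beta).
  { unfold a. rewrite ln_mult by (try apply pow_lt; try apply exp_pos; lra). rewrite ln_pow by lra. rewrite ln_exp. auto. }
  set (Sf := fun v => sumL (signs n) (fun z => exp (- lam * qform n v z))).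
  set (Phi := fun v => (- / (lam * a)) * Sf v + (- (ln a - 1) / lam)).
  assert (Pw : forall v, Phi v <= min_qform n v).
  { intros v. unfold min_qform. apply min_list_ge. apply signs_ne. intros z Hz.
    assert (HSp : 0 < Sf v) by (apply sumL_pos; [apply signs_ne | intros; apply exp_pos]).
    assert (H1 : exp (- lam * qform n v z) <= Sf v) by (unfold Sf; apply (sumL_ge _ (fun z => exp (- lam * qform n v z))); auto; intros; apply exp_pos).
    apply ln_le_mono in H1. 2: apply exp_pos. rewrite ln_exp in H1.
    pose proof (ln_le_lin (Sf v) a HSp Ha).
    unfold Phi.
    assert (E : - / (lam * a) * Sf v + - (ln a - 1) / lam = - (Sf v / a + ln a - 1) / lam) by (field; lra).
    rewrite E. apply (Rmult_le_reg_l lam); auto.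
    replace (lam * (- (Sf v / a + ln a - 1) / lam)) with (- (Sf v / a + ln a - 1)) by (field; lra). lra. }
  destruct (GE_sumL (n * n) (exp beta) (fun z v => exp (- lam * qform n v z)) (signs n)) as [Et [HEt1 HEt2]].
  { intros z Hz. apply exp_q; auto. }
  rewrite signs_len, pow_INR in HEt1. simpl (INR 2) in HEt1. replace (1 + 1) with 2 in HEt1 by ring.
  fold a in HEt1.
  assert (EPhi := GE_plus _ _ _ _ _ (GE_scal _ _ _ (- / (lam * a)) HEt2) (GE_const (n * n) (- (ln a - 1) / lam))).
  destruct (min_qform_exists n) as [l Hl].
  exists l. split; auto.
  assert (Le := GE_le _ _ _ _ _ Pw EPhi Hl).
  pose proof (cG_pow (n * n)) as [C0 C1].
  assert (Hlna0 : 0 <= ln a).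
  { rewrite Hlna. pose proof (ln_lt_2). pose proof (pos_INR n). rewrite Hbeta. nra. }
  assert (T1 : - / (lam * a) * Et >= - / lam).
  { assert (Et / a <= 1) by (apply (Rmult_le_reg_l a); auto; field_simplify; lra).
    assert (Et / a * / lam <= / lam). { rewrite <- (Rmult_1_l (/ lam)) at 2. apply Rmult_le_compat_r. apply Rlt_le, Rinv_0_lt_compat; auto. lra. }
    replace (- / (lam * a) * Et) with (- (Et / a * / lam)) by (field; lra). lra. }
  assert (T2 : - (ln a - 1) / lam * cG ^ (n * n) >= - ln a / lam).
  { assert ((ln a - 1) * cG ^ (n * n) <= ln a) by nra.
    unfold Rdiv. replace (- (ln a - 1) * / lam * cG ^ (n * n)) with (- ((ln a - 1) * cG ^ (n * n)) * / lam) by ring.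
    apply Rle_ge. apply Rmult_le_compat_r. apply Rlt_le, Rinv_0_lt_compat; auto. lra. }
  assert (Final : - / lam - ln a / lam >= - (601 / 1000) * s - 833 / 1000 * (INR n * s)).
  { rewrite Hlna, Hbeta. pose proof ln2_le. unfold lam.
    replace (- / (5 / 3 / s) - (INR n * ln 2 + 25 * INR n / 36) / (5 / 3 / s))
      with (- (3/5) * s * (1 + INR n * ln 2 + 25 * INR n / 36)) by (field; lra).
    apply Rle_ge. rewrite <- Hss at 2 3. 
    assert (INR n * ln 2 <= INR n * (6938/10000)) by (apply Rmult_le_compat_l; lra).
    rewrite Hss. nra. }
  lra.
Qed.
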